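(* Let $c$ be a positive integer and $\zeta_c\in\mathbb{C}$ a primitive $c$-th root of unity. For $i,j\in\mathbb{Z}/c\mathbb{Z}$ let $\Theta_c^{i,j}\in\mathbb{Z}[T]$ be the minimal polynomial of $\zeta_c^i+\zeta_c^{-i}+\zeta_c^j+\zeta_c^{-j}$ and $\Delta_c^{i,j}\in\mathbb{Z}[T]$ the minimal polynomial of $\zeta_c^{i+j}+\zeta_c^{i-j}+\zeta_c^{-i+j}+\zeta_c^{-i-j}+2$, and set $\Theta_c=\mathrm{lcm}\{\Theta_c^{i,j}: i,j\in\mathbb{Z}/c\mathbb{Z}\}$, $\Delta_c=\mathrm{lcm}\{\Delta_c^{i,j}: i,j\in\mathbb{Z}/c\mathbb{Z}\}$. Then for every field $\mathbb{F}$ and every $g\in\mathrm{Sp}_4(\mathbb{F})$ of order dividing $c$, we have $\Theta_c(\chi_3(g))=0$ and $\Delta_c(\chi_2(g))=0$ in $\mathbb{F}$.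
   Context: For $M\in\mathrm{M}_4(\mathbb{F})$ write its characteristic polynomial as $T^4-\chi_3(M)T^3+\chi_2(M)T^2-\chi_1(M)T+\chi_0(M)$ (so $\chi_3(M)=\mathrm{tr}(M)$). Polynomials in $\mathbb{Z}[T]$ are evaluated in $\mathbb{F}$ via the canonical map $\mathbb{Z}\to\mathbb{F}$. *)

(* Defs.v *)
From HB Require Import structures.
From mathcomp Require Import all_boot all_order all_algebra all_field.
Set Implicit Arguments. Unset Strict Implicit. Unset Printing Implicit Defensive.
Import Order.TTheory GRing.Theory Num.Theory.
Local Open Scope ring_scope.

(* chi k M : coefficients of the characteristic polynomial written as
   T^4 - chi_3 T^3 + chi_2 T^2 - chi_1 T + chi_0, i.e. chi_k = (-1)^k [T^k] char_poly *)
Definition chi (F : fieldType) (k : nat) (M : 'M[F]_4) : F :=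
  (-1) ^+ k * (char_poly M)`_k.

Definition symJ (F : fieldType) : 'M[F]_4 :=
  \matrix_(i < 4, j < 4)
    (if (i + 2 == j)%N then 1 else if (j + 2 == i)%N then -1 else 0).

Definition symplectic (F : fieldType) (g : 'M[F]_4) : Prop :=
  g^T *m symJ F *m g = symJ F.

Definition lcmp2 (p q : {poly algC}) : {poly algC} := (p * q) %/ gcdp p q.
Definition monicize (p : {poly algC}) : {poly algC} := (lead_coef p)^-1 *: p.
Definition lcm_seq (s : seq {poly algC}) : {poly algC} := monicize (foldr lcmp2 1 s).

(* reading a polynomial with integer coefficients in algC as an element of Z[T] *)
Definition polyZ_of (p : {poly algC}) : {poly int} :=
  \poly_(i < size p) Num.floor p`_i.

Definition Theta (c : nat) (z : algC) : {poly int} :=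
  polyZ_of (lcm_seq [seq minCpoly (z ^+ i + z ^- i + z ^+ j + z ^- j)
                    | i : 'I_c <- enum 'I_c, j : 'I_c <- enum 'I_c]).

Definition Delta (c : nat) (z : algC) : {poly int} :=
  polyZ_of (lcm_seq [seq minCpoly (z ^+ i * z ^+ j + z ^+ i * z ^- j
                                   + z ^- i * z ^+ j + z ^- i * z ^- j + 2)
                    | i : 'I_c <- enum 'I_c, j : 'I_c <- enum 'I_c]).

(* Main.v *)
Require Import Defs.
From HB Require Import structures.
From mathcomp Require Import all_boot all_order all_algebra all_field.
Set Implicit Arguments. Unset Strict Implicit. Unset Printing Implicit Defensive.
Import Order.TTheory GRing.Theory Num.Theory.
Local Open Scope ring_scope.
From mathcomp Require Import ring.
From Stdlib Require Import Classical.
From mathcomp Require Import ring.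
Section Det.
Variable R : comNzRingType.
Lemma minor_mx n (F : 'I_n.+1 -> 'I_n.+1 -> R) (i j : 'I_n.+1) : row' i (col' j (\matrix_(k < n.+1, l < n.+1) F k l)) = \matrix_(k < n, l < n) F (lift i k) (lift j l).
Proof. by apply/matrixP => k l; rewrite !mxE. Qed.
Lemma ord0E n : ord0 = inord 0 :> 'I_n.+1.
Proof. by apply: val_inj; rewrite /= inordK. Qed.
Lemma zero_ordE n : (0 : 'I_n.+1) = inord 0.
Proof. by apply: val_inj; rewrite /= inordK. Qed.
Lemma lift_inordE n i a : (i < n.+2)%N -> (a < n.+1)%N ->
  lift (inord i : 'I_n.+2) (inord a : 'I_n.+1) = inord (bump i a).
Proof.
move=> hi ha; apply: val_inj => /=.
have ha' : (a < n.+2)%N by apply: ltn_trans ha _.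
rewrite (inordK hi) (inordK ha) inordK //.
by rewrite /bump; case: (i <= a)%N => //=; rewrite add1n ltnS.
Qed.
Lemma det2 (F : 'I_2 -> 'I_2 -> R) : let f i j := F (inord i) (inord j) in
  \det (\matrix_(i < 2, j < 2) F i j) = f 0%N 0%N * f 1%N 1%N - f 0%N 1%N * f 1%N 0%N.
Proof.
rewrite /= (expand_det_row _ ord0) !big_ord_recl big_ord0 /cofactor !det_mx11 !mxE /=.
rewrite !ord0E ?zero_ordE !lift_inordE // /bump /= ?addn0 ?add0n ?addnS; ring.
Qed.
Lemma det3 (F : 'I_3 -> 'I_3 -> R) : let f i j := F (inord i) (inord j) in
  \det (\matrix_(i < 3, j < 3) F i j) =
  f 0%N 0%N * (f 1%N 1%N * f 2%N 2%N - f 1%N 2%N * f 2%N 1%N)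
- f 0%N 1%N * (f 1%N 0%N * f 2%N 2%N - f 1%N 2%N * f 2%N 0%N)
+ f 0%N 2%N * (f 1%N 0%N * f 2%N 1%N - f 1%N 1%N * f 2%N 0%N).
Proof.
rewrite /= (expand_det_row _ ord0) !big_ord_recl big_ord0 /cofactor !minor_mx !det2 !mxE /=.
rewrite !ord0E ?zero_ordE !lift_inordE // /bump /= ?addn0 ?add0n ?addnS; ring.
Qed.
Definition det4f (f : nat -> nat -> R) :=
  f 0%N 0%N * (f 1%N 1%N * (f 2%N 2%N * f 3%N 3%N - f 2%N 3%N * f 3%N 2%N) - f 1%N 2%N * (f 2%N 1%N * f 3%N 3%N - f 2%N 3%N * f 3%N 1%N) + f 1%N 3%N * (f 2%N 1%N * f 3%N 2%N - f 2%N 2%N * f 3%N 1%N))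
- f 0%N 1%N * (f 1%N 0%N * (f 2%N 2%N * f 3%N 3%N - f 2%N 3%N * f 3%N 2%N) - f 1%N 2%N * (f 2%N 0%N * f 3%N 3%N - f 2%N 3%N * f 3%N 0%N) + f 1%N 3%N * (f 2%N 0%N * f 3%N 2%N - f 2%N 2%N * f 3%N 0%N))
+ f 0%N 2%N * (f 1%N 0%N * (f 2%N 1%N * f 3%N 3%N - f 2%N 3%N * f 3%N 1%N) - f 1%N 1%N * (f 2%N 0%N * f 3%N 3%N - f 2%N 3%N * f 3%N 0%N) + f 1%N 3%N * (f 2%N 0%N * f 3%N 1%N - f 2%N 1%N * f 3%N 0%N))
- f 0%N 3%N * (f 1%N 0%N * (f 2%N 1%N * f 3%N 2%N - f 2%N 2%N * f 3%N 1%N) - f 1%N 1%N * (f 2%N 0%N * f 3%N 2%N - f 2%N 2%N * f 3%N 0%N) + f 1%N 2%N * (f 2%N 0%N * f 3%N 1%N - f 2%N 1%N * f 3%N 0%N)).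
Lemma det4 (F : 'I_4 -> 'I_4 -> R) :
  \det (\matrix_(i < 4, j < 4) F i j) = det4f (fun i j => F (inord i) (inord j)).
Proof.
rewrite (expand_det_row _ ord0) !big_ord_recl big_ord0 /cofactor !minor_mx !det3 !mxE /=.
rewrite !ord0E ?zero_ordE !lift_inordE // /bump /= ?addn0 ?add0n ?addnS /det4f; ring.
Qed.
Definition m3 (f : nat -> nat -> R) (a b c : nat) :=
  f a a * (f b b * f c c - f b c * f c b) - f a b * (f b a * f c c - f b c * f c a)
  + f a c * (f b a * f c b - f b b * f c a).
Definition E1 f : R := f 0%N 0%N + f 1%N 1%N + f 2%N 2%N + f 3%N 3%N.
Definition m2 (f : nat -> nat -> R) a b := f a a * f b b - f a b * f b a.
Definition E2 f : R := m2 f 0 1 + m2 f 0 2 + m2 f 0 3 + m2 f 1 2 + m2 f 1 3 + m2 f 2 3.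
Definition E3 f : R := m3 f 0 1 2 + m3 f 0 1 3 + m3 f 0 2 3 + m3 f 1 2 3.
Definition ent (A : 'M[R]_4) i j := A (inord i) (inord j).
Lemma inord_eqE n a b : (a < n.+1)%N -> (b < n.+1)%N -> (inord a == inord b :> 'I_n.+1) = (a == b).
Proof. by move=> ha hb; rewrite -(inj_eq val_inj) /= !inordK. Qed.
End Det.
Lemma char_poly4 (R : comNzRingType) (A : 'M[R]_4) : char_poly A =
  Poly [:: det4f (ent A); - E3 (ent A); E2 (ent A); - E1 (ent A); 1].
Proof.
rewrite /char_poly.
have -> : char_poly_mx A = \matrix_(i, j) ('X *+ (i == j) - (A i j)%:P).
  by apply/matrixP => i j; rewrite !mxE.
rewrite det4 /det4f /=.
rewrite !inord_eqE //= /det4f /E1 /E2 /E3 /m2 /m3 /ent /=.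
rewrite !cons_poly_def mul0r add0r.
ring.
Qed.
Section Ext.
Variable K : fieldType.
Variable h : {poly K}.
Hypothesis hI : monic_irreducible_poly h.
Definition extf : K -> {poly %/ h with hI} := qfpoly_const hI.
HB.instance Definition _ := GRing.RMorphism.on extf.
Lemma extf_root : root (map_poly extf h) (qpolyX h : {poly %/ h with hI}).
Proof.
have := in_qpoly_comp_horner h h 'X.
rewrite comp_polyXr /root => <-.
apply/eqP; apply: val_inj => /=.
rewrite /in_qpoly /= mk_monicE //; exact: Pdiv.RingMonic.rmodpp (snd hI).
Qed.
End Ext.

Lemma irr_factor (K : fieldType) (P : {poly K}) : (1 < size P)%N ->
  exists h : {poly K}, [/\ irreducible_poly h, h \is monic & h %| P].
Proof.
elim: {P}(size P) {-2}P (leqnn (size P)) => [|n IH] P sP sP1.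
  by move: sP; rewrite leqn0 => /eqP E; rewrite E in sP1.
have P0 : P != 0 by rewrite -size_poly_gt0 (ltn_trans _ sP1).
have lc0 : (lead_coef P)^-1 != 0 by rewrite invr_eq0 lead_coef_eq0.
case: (classic (irreducible_poly P)) => [irrP|nirr].
  exists ((lead_coef P)^-1 *: P); split.
  - split; first by rewrite size_scale.
    move=> q q1; rewrite dvdpZr // => /(apply_irredp irrP q1) qP.
    by apply: eqp_trans qP _; rewrite eqp_sym eqp_scale.
  - by rewrite monicE lead_coefZ mulVf // lead_coef_eq0.
  - by rewrite dvdpZl.
have [q [q1 qP nqP]] : exists q : {poly K}, [/\ size q != 1%N, q %| P & ~~ (q %= P)].
  apply: NNPP => H; apply: nirr; split => // q q1 qP.
  by apply: NNPP => nq; apply: H; exists q; split => //; apply/negP.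
have q0 : q != 0 by apply: contraNneq P0 => E; rewrite E dvd0p in qP.
have sq : (size q < size P)%N.
  rewrite ltn_neqAle dvdp_leq // andbT; by rewrite dvdp_size_eqp.
have sq1 : (1 < size q)%N.
  by rewrite ltn_neqAle eq_sym q1 /= size_poly_gt0.
have [h [hi hm hq]] := IH q (leq_trans sq sP) sq1.
by exists h; split => //; apply: dvdp_trans qP.
Qed.
Lemma ext_root (K : fieldType) (P : {poly K}) : (1 < size P)%N ->
  exists (L : fieldType) (f : {rmorphism K -> L}) (x : L), root (map_poly f P) x.
Proof.
move=> sP; have [h [hi hm hP]] := irr_factor sP.
have hI : monic_irreducible_poly h by split.
exists {poly %/ h with hI}; exists (extf hI : {rmorphism _ -> _}).
exists (qpolyX h : {poly %/ h with hI}).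
have [r ->] := dvdpP _ _ hP.
by rewrite rmorphM rootM extf_root orbT.
Qed.
Section Symp.
Variable F : fieldType.
Implicit Type g : 'M[F]_4.
Definition Mf (f : nat -> nat -> F) k l := f 0%N k * f 2%N l + f 1%N k * f 3%N l - f 2%N k * f 0%N l - f 3%N k * f 1%N l.
Lemma symJ_ent i j : (i < 4)%N -> (j < 4)%N ->
  symJ F (inord i) (inord j) = if (i + 2 == j)%N then 1 else if (j + 2 == i)%N then -1 else 0.
Proof. by move=> hi hj; rewrite mxE !inordK. Qed.
Lemma Ment g k l : (k < 4)%N -> (l < 4)%N ->
  (g^T *m symJ F *m g) (inord k) (inord l) = Mf (ent g) k l.
Proof.
move=> hk hl.
rewrite !mxE !big_ord_recl big_ord0 !mxE !big_ord_recl !big_ord0 !mxE.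
rewrite !ord0E !lift_inordE // /bump /= !addn0.
rewrite !inordK //= -[(1+1)%N]/2%N -[(1+(1+1))%N]/3%N /Mf /ent; ring.
Qed.
End Symp.
Lemma mx_eta (R : comNzRingType) n (A : 'M[R]_n) : A = \matrix_(i, j) A i j.
Proof. by apply/matrixP => i j; rewrite mxE. Qed.
Lemma tr_adj4 (R : comNzRingType) (A : 'M[R]_4) : \tr (\adj A) = E3 (ent A).
Proof.
rewrite /mxtrace !big_ord_recl big_ord0 !mxE /cofactor [A]mx_eta !minor_mx !det3.
rewrite !ord0E ?zero_ordE !lift_inordE // /bump /= !addn0.
rewrite !inordK //= -[(1+1)%N]/2%N -[(1+(1+1))%N]/3%N /E3 /m3 /ent.
rewrite !exprD !mxE ?add0n -?[(1+1)%N]/2%N; ring.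
Qed.
Lemma ord4_cases (P : 'I_4 -> Prop) : P (inord 0) -> P (inord 1) -> P (inord 2) -> P (inord 3) -> forall i, P i.
Proof.
move=> h0 h1 h2 h3 i; rewrite -(inord_val i).
by case: i => [[|[|[|[|//]]]] ?].
Qed.
Section Symp2.
Variable F : fieldType.
Lemma symJ2 : symJ F *m symJ F = -1.
Proof.
apply/matrixP; apply: ord4_cases; apply: ord4_cases;
rewrite !mxE !big_ord_recl big_ord0 !ord0E ?zero_ordE !lift_inordE // /bump /= !addn0 !symJ_ent //;
rewrite ?mxE ?inordK //= ?inord_eqE //=.
all: ring.
Qed.
Lemma tr4 (R : comNzRingType) (A : 'M[R]_4) : \tr A = E1 (ent A).
Proof.
rewrite /mxtrace !big_ord_recl big_ord0 !ord0E ?zero_ordE !lift_inordE // /bump /= !addn0.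
by rewrite /E1 /ent -[(1+1)%N]/2%N -[(1+(1+1))%N]/3%N addr0 !addrA.
Qed.
Lemma symp_facts (g : 'M[F]_4) : symplectic g -> det4f (ent g) = 1 /\ E3 (ent g) = E1 (ent g).
Proof.
move=> sg.
have M k l : (k < 4)%N -> (l < 4)%N -> Mf (ent g) k l = symJ F (inord k) (inord l).
  by move=> hk hl; rewrite -Ment // sg.
have M01 := M 0%N 1%N isT isT; have M02 := M 0%N 2%N isT isT; have M03 := M 0%N 3%N isT isT.
have M12 := M 1%N 2%N isT isT; have M13 := M 1%N 3%N isT isT; have M23 := M 2%N 3%N isT isT.
rewrite !symJ_ent //= in M01 M02 M03 M12 M13 M23.
have pf : Mf (ent g) 0 1 * Mf (ent g) 2 3 - Mf (ent g) 0 2 * Mf (ent g) 1 3 + Mf (ent g) 0 3 * Mf (ent g) 1 2 = - det4f (ent g).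
  rewrite /Mf /det4f; ring.
rewrite M01 M02 M03 M12 M13 M23 in pf.
have d1 : det4f (ent g) = 1.
  by apply: oppr_inj; rewrite -pf; ring.
split => //.
have dg : \det g = 1 by rewrite [g in \det g]mx_eta det4.
pose h := - (symJ F *m g^T *m symJ F).
have hg : h *m g = 1%:M.
  by rewrite /h mulNmx -!mulmxA (mulmxA g^T) sg symJ2 opprK.
have gh := mulmx1C hg.
have ah : \adj g = h.
  by rewrite -[\adj g]mulmx1 -gh mulmxA mul_adj_mx dg mul1mx.
rewrite -tr_adj4 ah -tr4 /h linearN /= -mulmxA mxtrace_mulC -mulmxA symJ2.
rewrite mulmxN mulmx1 linearN opprK.
exact: mxtrace_tr.
Qed.
End Symp2.
Lemma eig_pow (L : fieldType) (G : 'M[L]_4) c x : G ^+ c = 1 -> root (char_poly G) x -> x ^+ c = 1.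
Proof.
move=> Gc; rewrite -eigenvalue_root_char => /eigenvalueP [v vG v0].
have P n : v *m G ^+ n = x ^+ n *: v.
  elim: n => [|n IH]; first by rewrite !expr0 mulmx1 scale1r.
  by rewrite !exprSr -mulmxE mulmxA IH -scalemxAl vG scalerA.
have := P c; rewrite Gc mulmx1 => E.
have : (x ^+ c - 1) *: v = 0 by rewrite scalerBl -E scale1r subrr.
move/eqP; by rewrite scaler_eq0 (negbTE v0) orbF subr_eq0 => /eqP.
Qed.
Lemma chi4 (F : fieldType) (g : 'M[F]_4) : chi 3 g = E1 (ent g) /\ chi 2 g = E2 (ent g).
Proof. by rewrite /chi char_poly4 !coef_Poly /=; split; ring. Qed.
Lemma map_mxX (A B : fieldType) (f : {rmorphism A -> B}) (g : 'M[A]_4) n :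
  map_mx f (g ^+ n) = (map_mx f g) ^+ n.
Proof.
elim: n => [|n IH]; first by rewrite !expr0 map_mx1.
by rewrite !exprS -!mulmxE map_mxM IH.
Qed.
Lemma root3 (K : fieldType) (a b : K) : exists (L : fieldType) (f : {rmorphism K -> L}) (x : L),
  x ^+ 2 + f b * x + f a = 0.
Proof.
have sz : (1 < size (Poly [:: a; b; 1%R]))%N by rewrite (@PolyK _ 1%R) //= oner_eq0.
have [L [f [x]]] := ext_root sz.
rewrite map_Poly /root horner_Poly /= rmorph1 => /eqP E.
by exists L, f, x; rewrite -E; ring.
Qed.
Lemma eig_exist (F : fieldType) (g : 'M[F]_4) (c : nat) : symplectic g -> g ^+ c = 1 ->
  exists (L : fieldType) (f : {rmorphism F -> L}) (x y : L),
  [/\ x ^+ c = 1, y ^+ c = 1, x != 0 & y != 0] /\ (f (chi 3 g) = x + x^-1 + y + y^-1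
    /\ f (chi 2 g) = (x + x^-1) * (y + y^-1) + 2).
Proof.
move=> sg gc.
have [d1 e31] := symp_facts sg; have [-> ->] := chi4 g.
set t := E1 (ent g); set s := E2 (ent g).
have cp : char_poly g = Poly [:: 1%R; -t; s; -t; 1%R] by rewrite char_poly4 d1 e31.
clearbody t s.
have [L1 [f1 [u1 hu1]]] := root3 (s - 2) (- t).
have [L2 [f2 [x hx]]] := root3 1 (- u1).
have [L3 [f3 [y hy]]] := root3 1 (- (f2 (f1 t - u1))).
pose f := (f3 \o f2 \o f1 : {rmorphism F -> L3}).
pose X := f3 x; pose U := f3 (f2 u1); pose T := f t; pose S := f s.
have hA : U ^+ 2 - T * U + S - 2 = 0.
  have := congr1 (f3 \o f2) hu1; rewrite /= !rmorph0 => <-.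
  rewrite /U /T /S /f /= !rmorphD !rmorphN !rmorphXn !rmorphM /= ?rmorphB ?rmorph_nat ?rmorph1 ?rmorphN; ring.
have hB : X ^+ 2 - U * X + 1 = 0.
  have E := congr1 f3 hx; rewrite raddf0 in E; rewrite -E.
  rewrite /U /X /= !rmorphD !rmorphN !rmorphXn !rmorphM !rmorph1; ring.
have hC : y ^+ 2 - (T - U) * y + 1 = 0.
  rewrite -hy /U /T /f /= rmorph1 rmorphN rmorphB; ring.
have X0 : X != 0.
  apply/eqP => X0; move: hB; rewrite X0 expr2 !mulr0 subr0 add0r => /eqP; by rewrite oner_eq0.
have y0 : y != 0.
  apply/eqP => y0; move: hC; rewrite y0 expr2 !mulr0 subr0 add0r => /eqP; by rewrite oner_eq0.
have eX : X * (U - X) = 1 by rewrite -[RHS]subr0 -hB; ring.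
have ey : y * (T - U - y) = 1 by rewrite -[RHS]subr0 -hC; ring.
have Xi : X^-1 = U - X by rewrite -[U - X]mul1r -(mulVf X0) -mulrA eX mulr1.
have yi : y^-1 = T - U - y by rewrite -[T - U - y]mul1r -(mulVf y0) -mulrA ey mulr1.
have G1 : (map_mx f g) ^+ c = 1 by rewrite -map_mxX gc map_mx1.
have cpG : forall z, (char_poly (map_mx f g)).[z] =
    z ^+ 4 - T * z ^+ 3 + S * z ^+ 2 - T * z + 1.
  move=> z; rewrite -map_char_poly cp map_Poly horner_Poly /= rmorph1 !rmorphN /T /S; ring.
exists L3, f, X, y; split; [split => // | split].
- apply: eig_pow G1 _; rewrite /root cpG.
  rewrite (_ : _ - _ + 1 = (X ^+ 2 - U * X + 1) * (X ^+ 2 - (T - U) * X + 1) + X ^+ 2 * (U ^+ 2 - T * U + S - 2)); last by ring.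
  by rewrite hB hA mul0r mulr0 addr0.
- apply: eig_pow G1 _; rewrite /root cpG.
  rewrite (_ : _ - _ + 1 = (y ^+ 2 - U * y + 1) * (y ^+ 2 - (T - U) * y + 1) + y ^+ 2 * (U ^+ 2 - T * U + S - 2)); last by ring.
  by rewrite hC hA mulr0 mulr0 addr0.
- by rewrite Xi yi -/T; ring.
- rewrite Xi yi -/S -[LHS]subr0 -hA; ring.
Qed.
Definition psi (K : comNzRingType) (x : K) : {rmorphism {poly int} -> K} :=
  horner_eval x \o map_poly intr.
Definition ev2 (K : comNzRingType) (x y : K) : {rmorphism {poly {poly int}} -> K} :=
  horner_eval y \o map_poly (psi x).

Lemma psiE (K : comNzRingType) (x : K) a : psi x a = (map_poly intr a).[x].
Proof. by []. Qed.
Lemma ev2E (K : comNzRingType) (x y : K) Q : ev2 x y Q = (map_poly (psi x) Q).[y].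
Proof. by []. Qed.

Lemma roots_zero (K : idomainType) (p : {poly K}) (rs : seq K) :
  (size p <= size rs)%N -> uniq rs -> all (root p) rs -> p = 0.
Proof.
move=> sp u r; apply/eqP; apply: contraTT sp => p0.
by rewrite -ltnNge; apply: max_poly_roots.
Qed.

Lemma psi_Xc (K : comNzRingType) (x : K) c : x ^+ c = 1 -> psi x ('X^c - 1) = 0.
Proof. move=> xc; rewrite psiE rmorphB rmorphXn /= map_polyX rmorph1 !hornerE.
by apply/eqP; rewrite subr_eq0; apply/eqP.
Qed.

Lemma psi_mod (K : comNzRingType) (x : K) c a : (0 < c)%N -> x ^+ c = 1 ->
  psi x (Pdiv.CommonRing.rmodp a ('X^c - 1)) = psi x a.
Proof.
move=> c0 xc.
rewrite {2}(Pdiv.RingMonic.rdivp_eq (monic_Xn_sub_1 _ c0) a) rmorphD rmorphM psi_Xc //.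
by rewrite mulr0 add0r.
Qed.

Lemma key c (z : algC) (Q : {poly {poly int}}) : (0 < c)%N -> c.-primitive_root z ->
  (forall i j, (i < c)%N -> (j < c)%N -> ev2 (z ^+ i) (z ^+ j) Q = 0) ->
  forall (K : fieldType) (x y : K), x ^+ c = 1 -> y ^+ c = 1 -> ev2 x y Q = 0.
Proof.
move=> c0 pz HQ.
pose Yc : {poly {poly int}} := 'X^c - 1.
have mYc : Yc \is monic by apply: monic_Xn_sub_1.
pose R := Pdiv.CommonRing.rmodp Q Yc.
pose R' := map_poly (fun a => Pdiv.CommonRing.rmodp a ('X^c - 1)) R.
have evQR (K : comNzRingType) (x y : K) : y ^+ c = 1 -> ev2 x y Q = ev2 x y R.
  move=> yc; rewrite {1}(Pdiv.RingMonic.rdivp_eq mYc Q) rmorphD rmorphM.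
  suff -> : ev2 x y Yc = 0 by rewrite mulr0 add0r.
  rewrite ev2E /Yc rmorphB rmorphXn /= map_polyX rmorph1 !hornerE.
  by apply/eqP; rewrite subr_eq0; apply/eqP.
have evRR' (K : comNzRingType) (x y : K) : x ^+ c = 1 -> ev2 x y R = ev2 x y R'.
  move=> xc; rewrite !ev2E; congr (_.[y]); apply/polyP => k.
  rewrite !coef_map_id0 ?rmorph0 ?Pdiv.CommonRing.rmod0p //.
  by rewrite psi_mod.
have sR : (size R <= c)%N.
  by rewrite -ltnS -(size_Xn_sub_1 {poly int} c0) Pdiv.CommonRing.ltn_rmodpN0 // monic_neq0.
pose rs := [seq z ^+ i | i <- iota 0 c].
have urs : uniq rs.
  rewrite map_inj_in_uniq ?iota_uniq // => i j; rewrite !mem_iota !add0n => /andP[_ hi] /andP[_ hj].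
  by move/eqP; rewrite (eq_prim_root_expr pz) !modn_small // => /eqP.
have srs : size rs = c by rewrite size_map size_iota.
have zc i : (z ^+ i) ^+ c = 1 by rewrite -exprM mulnC exprM (prim_expr_order pz) expr1n.
have R'0 : R' = 0.
  have Si i : (i < c)%N -> map_poly (psi (z ^+ i)) R' = 0.
    move=> hi; apply: (roots_zero (rs := rs)); rewrite ?srs //.
      apply: leq_trans (size_poly _ _) _.
      by apply: leq_trans (size_poly _ _) sR.
    apply/allP => w /mapP [j]; rewrite mem_iota add0n => /andP[_ hj] ->.
    by rewrite /root -ev2E -evRR' // -evQR // HQ.
  apply/polyP => k; rewrite coef0.
  pose r := R'`_k.
  have rE : r = Pdiv.CommonRing.rmodp R`_k ('X^c - 1).
    by rewrite /r /R' coef_map_id0 ?Pdiv.CommonRing.rmod0p.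
  suff : map_poly (intr : int -> algC) r = 0.
    rewrite -(rmorph0 (map_poly (intr : int -> algC))) => /map_inj_poly.
    by apply => //; apply: intr_inj.
  apply: (@roots_zero _ _ rs); rewrite ?srs //.
    apply: leq_trans (size_poly _ _) _.
    by rewrite -ltnS -(size_Xn_sub_1 int c0) rE Pdiv.CommonRing.ltn_rmodpN0 // monic_neq0 // monic_Xn_sub_1.
  apply/allP => w /mapP [i]; rewrite mem_iota add0n => /andP[_ hi] ->.
  by rewrite /root -psiE -(coef_map_id0 _ _ (rmorph0 (psi (z ^+ i)))) Si // coef0.
move=> K x y xc yc.
by rewrite evQR // evRR' // R'0 rmorph0.
Qed.
Lemma prod_polyOver_int (s : seq {poly algC}) : all (fun p => p \is a polyOver Num.int) s -> \prod_(p <- s) p \is a polyOver Num.int.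
Proof.
elim: s => [|p s IH] /=; first by rewrite big_nil polyOverC rpred1.
by case/andP=> hp hs; rewrite big_cons polyOver_mulr_2closed // IH.
Qed.
Lemma prod_XsubC_Aint (s : seq algC) : all (fun p => p \in Aint) s -> \prod_(r <- s) ('X - r%:P) \is a polyOver Aint.
Proof.
elim: s => [|p s IH] /=; first by rewrite big_nil polyOverC rpred1.
by case/andP=> hp hs; rewrite big_cons polyOver_mulr_2closed // ?IH // polyOverXsubC.
Qed.

Lemma lcmp2_dvdl p q : p %| lcmp2 p q.
Proof. by rewrite /lcmp2 -divp_mulA ?dvdp_gcdr // dvdp_mulr. Qed.
Lemma lcmp2_dvdr p q : q %| lcmp2 p q.
Proof. by rewrite /lcmp2 -divp_mulAC ?dvdp_gcdl // dvdp_mull. Qed.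
Lemma lcmp2_dvd p q : lcmp2 p q %| p * q.
Proof.
rewrite /lcmp2 -divp_mulA ?dvdp_gcdr //.
by apply: dvdp_mul => //; apply: divp_dvd; apply: dvdp_gcdr.
Qed.
Lemma foldr_dvd (s : seq {poly algC}) p : p \in s -> p %| foldr lcmp2 1 s.
Proof.
elim: s => [|q s IH] //=; rewrite in_cons => /orP [/eqP ->|ps].
  exact: lcmp2_dvdl.
exact: dvdp_trans (IH ps) (lcmp2_dvdr _ _).
Qed.
Lemma foldr_dvd_prod (s : seq {poly algC}) : foldr lcmp2 1 s %| \prod_(p <- s) p.
Proof.
elim: s => [|q s IH] /=; first by rewrite big_nil.
rewrite big_cons; apply: dvdp_trans (lcmp2_dvd _ _) _.
by apply: dvdp_mul.
Qed.
Notation pQ := (map_poly (ratr : rat -> algC)).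
Lemma foldr_Q (s : seq {poly algC}) :
  (forall p, p \in s -> exists q : {poly rat}, p = pQ q) ->
  exists q : {poly rat}, foldr lcmp2 1 s = pQ q.
Proof.
elim: s => [|p s IH] H /=; first by exists 1; rewrite rmorph1.
have [a ->] := H p (mem_head _ _).
have [b ->] : exists b : {poly rat}, foldr lcmp2 1 s = pQ b.
  by apply: IH => q qs; apply: H; rewrite in_cons qs orbT.
rewrite -/(foldr lcmp2 1 (map_poly ratr a :: s)).
exists (a * b %/ gcdp a b).
by rewrite /lcmp2 -gcdp_map -rmorphM -map_divp.
Qed.

Lemma lcm_facts c (al : 'I_c -> 'I_c -> algC) : (forall i j, al i j \in Aint) ->
  let L := lcm_seq [seq minCpoly (al i j) | i <- enum 'I_c, j <- enum 'I_c] in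
  map_poly intr (polyZ_of L) = L /\ (forall i j, root L (al i j)).
Proof.
move=> Ha L.
pose s := [seq minCpoly (al i j) | i <- enum 'I_c, j <- enum 'I_c].
pose F := foldr lcmp2 1 s.
have Ls : L = (lead_coef F)^-1 *: F by [].
clearbody L.
have mem_s p : p \in s -> exists i j, p = minCpoly (al i j).
  by case/allpairsP => [[i j] [_ _ ->]]; exists i, j.
split; last first.
  move=> i j; have [F0|F0] := eqVneq F 0.
    by rewrite Ls F0 scaler0 root0.
  rewrite Ls rootZ ?invr_eq0 ?lead_coef_eq0 //.
  apply: root_dvdp (root_minCpoly (al i j)).
  by apply: foldr_dvd; apply: allpairs_f; rewrite mem_enum.
suff LZ : L \is a polyOver Num.int by rewrite /polyZ_of -/(map_poly _ L) floorpK.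
apply/polyOverP => k; apply: Cint_rat_Aint.
  have [q Fq] : exists q : {poly rat}, F = pQ q.
    apply: foldr_Q => p /mem_s [i [j ->]].
    by have [q [-> _] _] := minCpolyP (al i j); exists q.
  rewrite Ls Fq lead_coef_map -fmorphV -map_polyZ coef_map /=.
  exact: Crat_rat.
have [F0|F0] := eqVneq F 0.
  by rewrite Ls F0 scaler0 coef0 rpred0.
have lL : lead_coef L = 1 by rewrite Ls lead_coefZ mulVf // lead_coef_eq0.
have [r Lr] := closed_field_poly_normal L.
rewrite lL scale1r in Lr.
suff : L \is a polyOver Aint by move/polyOverP.
rewrite Lr; apply: prod_XsubC_Aint; apply/allP => x xr.
have : root L x by rewrite Lr root_prod_XsubC.
rewrite Ls rootZ ?invr_eq0 ?lead_coef_eq0 // => /(root_dvdp (foldr_dvd_prod s)) Px.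
apply: root_monic_Aint Px _ _.
  by rewrite big_seq; apply: monic_prod => p /mem_s [i [j ->]]; apply: minCpoly_monic.
apply: prod_polyOver_int; apply/allP => p /mem_s [i [j ->]].
exact: Ha.
Qed.
Lemma ev2X (K : comNzRingType) (x y : K) : ev2 x y 'X = y.
Proof. by rewrite ev2E map_polyX hornerX. Qed.
Lemma ev2C (K : comNzRingType) (x y : K) a : ev2 x y a%:P = psi x a.
Proof. by rewrite ev2E map_polyC hornerC. Qed.
Lemma psiX (K : comNzRingType) (x : K) : psi x 'X = x.
Proof. by rewrite psiE map_polyX hornerX. Qed.

Lemma hmap (A B : comNzRingType) (phi : {rmorphism A -> B}) (P : {poly int}) a :
  (map_poly intr P).[phi a] = phi ((map_poly intr P).[a]).
Proof.
rewrite -horner_map -map_poly_comp; congr (_.[_]); apply: eq_map_poly => n /=.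
by rewrite rmorph_int.
Qed.

Lemma inv_pow (K : fieldType) (w : K) c : (0 < c)%N -> w ^+ c = 1 -> w^-1 = w ^+ c.-1.
Proof.
move=> c0 wc.
have w0 : w != 0.
  apply/eqP => w0; move: wc; rewrite w0 expr0n; case: c c0 => // n _ /eqP; by rewrite eq_sym oner_eq0.
apply: (mulfI w0); rewrite mulfV // -exprS prednK //.
Qed.

Lemma assemble c (z : algC) (P : {poly int}) (E : {poly {poly int}})
   (al : 'I_c -> 'I_c -> algC) : (0 < c)%N -> c.-primitive_root z ->
  (forall i j, root (map_poly intr P) (al i j)) ->
  (forall i j : 'I_c, ev2 (z ^+ i) (z ^+ j) E = al i j) ->
  forall (K : fieldType) (x y : K), x ^+ c = 1 -> y ^+ c = 1 ->
    (map_poly intr P).[ev2 x y E] = 0.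
Proof.
move=> c0 pz Hr He K x y xc yc.
rewrite hmap; apply: (key c0 pz) => // i j hi hj.
by rewrite -hmap (He (Ordinal hi) (Ordinal hj)); apply/eqP; apply: Hr.
Qed.
Lemma ev2_theta (K : comNzRingType) (x y : K) c :
  ev2 x y (('X + 'X^(c.-1))%:P + ('X + 'X^(c.-1))) = x + x ^+ c.-1 + y + y ^+ c.-1.
Proof. by rewrite !rmorphD !rmorphXn !ev2C !psiX !ev2X !addrA. Qed.
Lemma ev2_delta (K : comNzRingType) (x y : K) c :
  ev2 x y ('X%:P * 'X + 'X%:P * 'X^(c.-1) + ('X^(c.-1))%:P * 'X + ('X^(c.-1))%:P * 'X^(c.-1) + 2)
  = x * y + x * y ^+ c.-1 + x ^+ c.-1 * y + x ^+ c.-1 * y ^+ c.-1 + 2.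
Proof. rewrite !rmorphD !rmorphM !rmorphXn !ev2C !psiX !ev2X rmorph1; ring. Qed.

Unset Implicit Arguments.
Theorem mainTheorem13 (c : nat) (z : algC) (F : fieldType) (g : 'M[F]_4) :
  (0 < c)%N -> c.-primitive_root z ->
  symplectic g -> g ^+ c = 1 ->
  (map_poly intr (Theta c z)).[chi 3 g] = 0 /\
  (map_poly intr (Delta c z)).[chi 2 g] = 0.
Proof.
move=> c0 pz sg gc.
have [L [f [x [y [[xc yc x0 y0] [h3 h2]]]]]] := eig_exist sg gc.
have zA : z \in Aint := Aint_prim_root pz.
have zc n : (z ^+ n) ^+ c = 1 by rewrite -exprM mulnC exprM (prim_expr_order pz) expr1n.
have zi n : z ^- n = (z ^+ n) ^+ c.-1 by rewrite (inv_pow c0 (zc n)).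
have Ai n : z ^+ n \in Aint by rewrite rpredX.
have Ai' n : z ^- n \in Aint by rewrite zi rpredX.
have xi : x^-1 = x ^+ c.-1 := inv_pow c0 xc.
have yi : y^-1 = y ^+ c.-1 := inv_pow c0 yc.
have fi : injective f := fmorph_inj f.
split; apply: fi; rewrite rmorph0 -hmap.
- have [HT RT] := @lcm_facts c (fun i j => z ^+ i + z ^- i + z ^+ j + z ^- j)
    (fun i j => rpredD (rpredD (rpredD (Ai _) (Ai' _)) (Ai _)) (Ai' _)).
  have HT' : map_poly intr (Theta c z) = lcm_seq [seq minCpoly (z ^+ i + z ^- i + z ^+ j + z ^- j)
                    | i : 'I_c <- enum 'I_c, j : 'I_c <- enum 'I_c] := HT.
  rewrite h3 xi yi -ev2_theta.
  apply: (assemble c0 pz (al := fun i j : 'I_c => z ^+ i + z ^- i + z ^+ j + z ^- j)) => //.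
    by move=> i j; rewrite HT'; apply: RT.
  by move=> i j; rewrite ev2_theta !zi.
- have [HT RT] := @lcm_facts c (fun i j => z ^+ i * z ^+ j + z ^+ i * z ^- j
                                   + z ^- i * z ^+ j + z ^- i * z ^- j + 2)
    (fun i j => rpredD (rpredD (rpredD (rpredD (rpredM (Ai _) (Ai _)) (rpredM (Ai _) (Ai' _)))
         (rpredM (Ai' _) (Ai _))) (rpredM (Ai' _) (Ai' _))) (rpred_nat _ 2)).
  have HT' : map_poly intr (Delta c z) = lcm_seq [seq minCpoly (z ^+ i * z ^+ j + z ^+ i * z ^- j
                                   + z ^- i * z ^+ j + z ^- i * z ^- j + 2)
                    | i : 'I_c <- enum 'I_c, j : 'I_c <- enum 'I_c] := HT.
  rewrite h2 xi yi.
  rewrite (_ : _ + 2 = x * y + x * y ^+ c.-1 + x ^+ c.-1 * y + x ^+ c.-1 * y ^+ c.-1 + 2); last by ring.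
  rewrite -ev2_delta.
  apply: (assemble c0 pz (al := fun i j : 'I_c => z ^+ i * z ^+ j + z ^+ i * z ^- j
                                   + z ^- i * z ^+ j + z ^- i * z ^- j + 2)) => //.
    by move=> i j; rewrite HT'; apply: RT.
  by move=> i j; rewrite ev2_delta !zi.
Qed.
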